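(* Let $\Phi_1(t)=\sum_{k\ge0}\pi_k t^k$, where $\pi_k$ is the probability that a polynomial chosen uniformly at random among all $f\in\mathbb{F}_q[x]$ of degree at most $q-1$ with nonzero constant term has exactly $k$ zeroes in $\mathbb{F}_q$. Then \[ \Phi_1(t)=\left(1+\frac{t-1}{q}\right)^{q-1}. \]
   Context: $\mathbb{F}_q$ is the finite field with $q$ elements. *)

(* Defs.v *)
From mathcomp Require Import all_boot all_order all_algebra all_field.
Set Implicit Arguments. Unset Strict Implicit. Unset Printing Implicit Defensive.
Import GRing.Theory Num.Theory.
Local Open Scope ring_scope.

(* F is a finite field; q := #|F|.  A polynomial of degree at most q-1 is
   encoded bijectively by its coefficient vector c : 'I_q -> F. *)
Definition poly_of_coefs (F : finFieldType) (c : {ffun 'I_#|F| -> F}) : {poly F} :=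
  \sum_(i < #|F|) c i *: 'X^i.

Definition sample_space (F : finFieldType) : {set {ffun 'I_#|F| -> F}} :=
  [set c | (poly_of_coefs c).[0] != 0].

Definition nzeros (F : finFieldType) (p : {poly F}) : nat :=
  #|[set x : F | root p x]|.

Definition pi_k (F : finFieldType) (k : nat) : rat :=
  #|[set c in sample_space F | nzeros (poly_of_coefs c) == k]|%:R
  / #|sample_space F|%:R.

(* Phi_1(t) = sum_k pi_k t^k ; pi_k = 0 for k > q, so the sum is finite *)
Definition Phi1 (F : finFieldType) : {poly rat} :=
  \sum_(k < #|F|.+1) pi_k F k *: 'X^k.

(* Main.v *)
Require Import Defs.
From mathcomp Require Import all_boot all_order all_algebra all_field.
Import GRing.Theory Num.Theory.
Local Open Scope ring_scope.

Section S.
Variable F : finFieldType.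
Local Notation q := #|F|.

Lemma coef_poc (c : {ffun 'I_q -> F}) (i : 'I_q) : (poly_of_coefs c)`_i = c i.
Proof.
rewrite /poly_of_coefs coef_sum (bigD1 i) //= coefZ coefXn eqxx mulr1 big1 ?addr0 //.
by move=> j /negbTE ji; rewrite coefZ coefXn (inj_eq val_inj) eq_sym ji mulr0.
Qed.

Lemma size_poc (c : {ffun 'I_q -> F}) : (size (poly_of_coefs c) <= q)%N.
Proof.
rewrite /poly_of_coefs; apply: (leq_trans (size_sum _ _ _)).
apply/bigmax_leqP => i _; apply: (leq_trans (size_scale_leq _ _)).
by rewrite size_polyXn.
Qed.

Definition E (c : {ffun 'I_q -> F}) : {ffun F -> F} := [ffun x => (poly_of_coefs c).[x]].

Lemma E_inj : injective E.
Proof.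
move=> c1 c2 h.
have H : poly_of_coefs c1 - poly_of_coefs c2 = 0.
  apply/eqP; apply/negPn/negP => nz.
  have := max_poly_roots nz (rs := enum F).
  rewrite enum_uniq -cardE => /(_ _ isT) H.
  have Hall : all (root (poly_of_coefs c1 - poly_of_coefs c2)) (enum F).
    apply/allP => x _.
    have := congr1 (fun f : {ffun F -> F} => f x) h; rewrite !ffunE => hx.
    by rewrite /root hornerD hornerN hx subrr.
  move: (H Hall); rewrite ltnNge => /negP; apply.
  by apply: (leq_trans (size_polyD _ _)); rewrite size_polyN geq_max !size_poc.
apply/ffunP => i; rewrite -!coef_poc; apply/eqP; rewrite -subr_eq0 -coefB H coef0 //.
Qed.

Lemma E_bij : bijective E.
Proof. apply: (inj_card_bij (@E_inj)); by rewrite !card_ffun card_ord. Qed.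


Definition w (x y : F) : {poly rat} :=
  if x == 0 then (y != 0)%:R else (if y == 0 then 'X else 1).

Lemma gen_g :
  \sum_(g : {ffun F -> F} | g 0 != 0) ('X : {poly rat})^+(#|[set x | g x == 0]|)
  = (q.-1)%:R *: ('X + (q.-1)%:R%:P) ^+ q.-1.
Proof.
have e1 : forall g : {ffun F -> F}, \prod_x w x (g x)
    = if g 0 != 0 then 'X^(#|[set x | g x == 0]|) else 0.
  move=> g; rewrite (bigD1 0) //= /w eqxx.
  case: ifP => g0; last by rewrite mul0r.
  rewrite mul1r (eq_bigr (fun x => if g x == 0 then 'X else 1)); last first.
    by move=> x /negbTE ->.
  rewrite -big_mkcondr /= prodr_const cardsE; congr (_ ^+ _).
  apply: eq_card => x; rewrite !unfold_in /=; case: (eqVneq x 0) => [->|nx]; [by apply/esym/negbTE | by []].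
rewrite big_mkcond /= (eq_bigr _ (fun g _ => esym (e1 g))) -bigA_distr_bigA /=.
have c1 : #|[pred x : F | x != 0]| = q.-1 by rewrite -(cardC1 0).
have s0 : \sum_j w 0 j = (q.-1)%:R.
  rewrite /w eqxx (eq_bigr (fun j : F => if j != 0 then 1 else 0)).
    by rewrite -big_mkcond /= sumr_const c1.
  by move=> j _; case: (j != 0).
have s1 : forall x, x != 0 -> \sum_j w x j = 'X + (q.-1)%:R%:P.
  move=> x /negbTE hx; rewrite /w hx (bigD1 0) //= eqxx; congr (_ + _).
  rewrite (eq_bigr (fun _ => 1)); last by move=> y /negbTE ->.
  by rewrite sumr_const c1 polyC_natr.
rewrite (bigD1 0) //= s0 (eq_bigr _ s1) prodr_const c1.
by rewrite scaler_nat mulr_natl.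
Qed.


Definition Q : {poly rat} :=
  \sum_(c | c \in sample_space F) ('X : {poly rat}) ^+ (nzeros (poly_of_coefs c)).

Lemma Q_g : Q = \sum_(g : {ffun F -> F} | g 0 != 0) ('X : {poly rat})^+(#|[set x | g x == 0]|).
Proof.
rewrite (reindex E); last exact: onW_bij (E_bij).
apply: eq_big => c; first by rewrite /sample_space inE ffunE.
move=> _; congr (_ ^+ _); apply: eq_card => x; by rewrite !inE ffunE.
Qed.

Lemma Phi_Q : Phi1 F = (#|sample_space F|%:R)^-1 *: Q.
Proof.
rewrite /Phi1 /pi_k /Q.
rewrite (eq_bigr (fun c => \sum_(k < q.+1) ((nzeros (poly_of_coefs c) == k)%:R : rat) *: 'X^k)); last first.
  move=> c _.
  have lt : (nzeros (poly_of_coefs c) < q.+1)%N by rewrite ltnS /nzeros max_card.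
  rewrite (bigD1 (Ordinal lt)) //= eqxx scale1r big1 ?addr0 //.
  move=> k /negbTE hk.
  have -> : (nzeros (poly_of_coefs c) == k) = false.
    by apply/negbTE; apply: contraFN hk => /eqP e; apply/eqP/val_inj.
  by rewrite scale0r.
rewrite exchange_big /= scaler_sumr; apply: eq_bigr => k _.
rewrite -scaler_suml scalerA mulrC; congr (_ *: _); congr (_ * _).
rewrite (eq_bigr (fun c => if nzeros (poly_of_coefs c) == k then (1 : rat) else 0)); last first.
  by move=> c _; case: (_ == _).
rewrite -big_mkcondr /= sumr_const; congr (_ %:R).
by apply: eq_card => c; rewrite !inE unfold_in /= inE.
Qed.

End S.

From mathcomp Require Import ring.

Theorem lemma4p2 (F : finFieldType) :
  Phi1 F = (1 + ('X - 1) * ((#|F|%:R : rat)^-1)%:P) ^+ (#|F|.-1).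
Proof.
have q1 : (1 < #|F|)%N.
  by apply/card_gt1P; exists 0, 1; rewrite !inE eq_sym oner_neq0.
set m := #|F|.-1.
have hq : #|F| = m.+1 by rewrite prednK // ltnW.
have hQ : Q F = m%:R *: ('X + m%:R%:P) ^+ m by rewrite Q_g gen_g.
have hm : (m%:R : rat) != 0 by rewrite pnatr_eq0 -lt0n -ltnS -hq.
have hM : ((m.+1)%:R : rat) != 0 by rewrite pnatr_eq0.
have hS : (#|sample_space F|%:R : rat) = m%:R * (m.+1)%:R ^+ m.
  have := congr1 (fun p => p.[1]) hQ.
  rewrite /Q horner_sum hornerZ horner_exp hornerD hornerX hornerC.
  rewrite (eq_bigr (fun _ => 1)); last by move=> c _; rewrite hornerXn expr1n.
  by rewrite sumr_const addrC natr1.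
rewrite Phi_Q hQ hS scalerA [in RHS]hq.
set c := ((m.+1)%:R : rat)^-1.
have one : (1 : {poly rat}) = c%:P * (m%:R%:P + 1).
  by rewrite -[X in _ + X]polyC1 -polyCD -polyCM natr1 mulVf // polyC1.
have e : 1 + ('X - 1) * c%:P = c%:P * ('X + m%:R%:P).
  rewrite {1}one; ring.
rewrite e exprMn -polyC_exp mul_polyC; congr (_ *: _).
by rewrite invfM mulrAC mulVf // mul1r exprVn.
Qed.
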